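(* Let $T$ be a tree and let $T'\subseteq T$ be a nonempty subset which is open and connected. Then (1) $\chi_T(T')\le2$; (2) $\chi_T(T')=2$ if and only if $T'=T$; (3) $\chi_T(T')=1$ if and only if $T'$ is a branch of $T$.
   Context: A tree $T$ is a finite connected graph without cycles, with vertex set $V$ and edge set $E$ (edges are $2$-element subsets of $V$), regarded as the set $V\sqcup E$, with the topology whose closed sets are the sub-graphs (subsets containing both endpoints of each edge they contain). For a vertex $v$, $E_v$ is the set of edges containing $v$, $\mathrm{val}(v)=\mathrm{card}\,E_v$, $\chi_T(v):=2-\mathrm{val}(v)$, and for a subset $T'$, $\chi_T(T'):=\sum_{v\in V\cap T'}\chi_T(v)$. A branch of $T$ is a set $B_v(e)$, for a vertex $v$ and $e\in E_v$, defined as the connected component of $T\setminus\{v\}$ containing $e$. *)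

(* Defs.v *)
(* A tree T = (V, E) with E a set of 2-element subsets of V,
   regarded as the finite tspace V ⊔ E, encoded as points of type V + {set V}. *)
From HB Require Import structures.
From mathcomp Require Import all_boot all_order all_algebra.
Set Implicit Arguments. Unset Strict Implicit. Unset Printing Implicit Defensive.
Import Order.TTheory GRing.Theory Num.Theory.

Section TreeDefs.
Variables (V : finType) (E : {set {set V}}).

Definition pt := (V + {set V})%type.

Definition tspace : {set pt} :=
  [set p : pt | match p with inl _ => true | inr s => s \in E end].

Definition adj : rel V := fun x y => [set x; y] \in E.

Definition is_graph : Prop := forall s, s \in E -> #|s| = 2.

Definition is_tree : Prop :=
  is_graph /\
  (forall x y : V, connect adj x y) /\
  ~ (exists p : seq V, [/\ uniq p, 2 < size p & cycle adj p]).

(* closed sets = subgraphs *)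
Definition is_closed (A : {set pt}) : Prop :=
  A \subset tspace /\
  forall s v, s \in E -> inr s \in A -> v \in s -> inl v \in A.

Definition is_open (U : {set pt}) : Prop :=
  U \subset tspace /\ is_closed (tspace :\: U).

Definition is_connected (S : {set pt}) : Prop :=
  ~ (exists O1 O2 : {set pt},
       [/\ is_open O1, is_open O2,
           S :&: O1 != set0, S :&: O2 != set0 &
           (S \subset O1 :|: O2) && (S :&: O1 :&: O2 == set0)]).

Definition Ev (v : V) : {set {set V}} := [set s in E | v \in s].
Definition valence (v : V) : nat := #|Ev v|.

Local Open Scope ring_scope.
Definition chi (v : V) : int := 2%:Z - (valence v)%:Z.
Definition chiS (A : {set pt}) : int := \sum_(v : V | inl v \in A) chi v.

(* the branch B_v(e): connected component of T \ {v} containing e *)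
Definition is_branch_at (v : V) (e : {set V}) (B : {set pt}) : Prop :=
  forall y : pt, y \in B <->
    exists C : {set pt}, [/\ is_connected C, C \subset tspace :\ inl v,
                             inr e \in C & y \in C].

Definition is_branch (B : {set pt}) : Prop :=
  exists v e, e \in Ev v /\ is_branch_at v e B.

End TreeDefs.

(* Main.v *)
Require Import Defs.
From mathcomp Require Import all_boot all_order all_algebra.
From mathcomp Require Import zify.
Import Order.TTheory GRing.Theory Num.Theory.
Set Implicit Arguments. Unset Strict Implicit. Unset Printing Implicit Defensive.

Section Tree.
Variables (V : finType) (E : {set {set V}}).
Hypothesis Hg : is_graph E.

Lemma edgeP s : s \in E -> exists a b, a != b /\ s = [set a; b].
Proof. by move=> /Hg /eqP /cards2P. Qed.

Lemma edge_other s a : s \in E -> a \in s -> exists b, a != b /\ s = [set a; b].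
Proof.
move=> sE as_; have [x [y [xy sxy]]] := edgeP sE; subst s.
move: as_; rewrite !inE => /orP[]/eqP->; first by exists y.
by exists x; rewrite eq_sym xy setUC.
Qed.

Lemma adjC x y : adj E x y = adj E y x.
Proof. by rewrite /adj setUC. Qed.

Lemma tsl v : inl v \in tspace E. Proof. by rewrite /tspace inE. Qed.
Lemma tsr s : (inr s \in tspace E) = (s \in E). Proof. by rewrite /tspace inE. Qed.

Lemma openP (U : {set pt V}) : is_open E U <->
  U \subset tspace E /\ (forall v s, s \in E -> v \in s -> inl v \in U -> inr s \in U).
Proof.
split.
  move=> [sU [_ cl]]; split=> // v s sE vs vU; apply/negPn/negP=> sU'.
  have : inl v \in tspace E :\: U.
    by apply: (cl s v sE) => //; rewrite in_setD sU' tsr.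
  by rewrite in_setD vU.
move=> [sU op]; split=> //; split; first exact: subsetDl.
move=> s v sE; rewrite !in_setD tsl tsr => /andP[sU' _] vs; rewrite andbT.
by apply/negP => /(op _ _ sE vs); rewrite (negPf sU').
Qed.

Lemma card_sum (T : finType) (A : {set T}) (P : pred T) :
  #|[set x in A | P x]| = \sum_(x in A) (P x : nat).
Proof.
rewrite -sum1_card big_mkcond [RHS]big_mkcond; apply: eq_bigr => x _.
by rewrite !inE; case: (x \in A); case: (P x).
Qed.

Lemma cardI2 a b (W : {set V}) : a != b ->
  #|[set a; b] :&: W| = (a \in W) + (b \in W).
Proof.
move=> ab; case aW: (a \in W); case bW: (b \in W).
- by rewrite (setIidPl _) ?cards2 ?ab // subUset !sub1set aW bW.
- have -> : [set a; b] :&: W = [set a].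
    apply/setP=> x; rewrite !inE; case: (eqVneq x a) => [->|]; rewrite ?aW //.
    by case: (eqVneq x b) => [->|]; rewrite ?bW.
  by rewrite cards1.
- have -> : [set a; b] :&: W = [set b].
    apply/setP=> x; rewrite !inE; case: (eqVneq x a) => [->|]; rewrite ?aW ?(negPf ab) //.
    by case: (eqVneq x b) => [->|]; rewrite ?bW.
  by rewrite cards1.
- have -> : [set a; b] :&: W = set0.
    apply/setP=> x; rewrite !inE; case: (eqVneq x a) => [->|]; rewrite ?aW //.
    by case: (eqVneq x b) => [->|]; rewrite ?bW.
  by rewrite cards0.
Qed.

Lemma conn_same (S O1 O2 : {set pt V}) : is_connected E S -> is_open E O1 -> is_open E O2 ->
  (forall p, p \in S -> (p \in O1) || (p \in O2)) ->
  (forall p, p \in S -> p \in O1 -> p \in O2 -> False) ->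
  forall p q, p \in S -> q \in S -> p \in O1 -> q \in O1.
Proof.
move=> C o1 o2 cov dis p q pS qS pO1; apply/negPn/negP => qO1.
apply: C; exists O1, O2; split=> //.
- by apply/set0Pn; exists p; rewrite inE pS pO1.
- by apply/set0Pn; exists q; rewrite inE qS; move: (cov q qS); rewrite (negPf qO1).
- apply/andP; split; first by apply/subsetP => x xS; rewrite inE; exact: cov.
  apply/eqP/setP=> x; rewrite !inE; apply/negP => /andP[/andP[xS xO1] xO2].
  exact: dis x xS xO1 xO2.
Qed.

Lemma conn_intro (S : {set pt V}) :
  (forall O1 O2, is_open E O1 -> is_open E O2 ->
  (forall p, p \in S -> (p \in O1) || (p \in O2)) ->
  (forall p, p \in S -> p \in O1 -> p \in O2 -> False) ->
  forall p q, p \in S -> q \in S -> p \in O1 -> q \in O1) -> is_connected E S.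
Proof.
move=> H [O1 [O2 [o1 o2 /set0Pn[p /setIP[pS pO1]] /set0Pn[q /setIP[qS qO2]] /andP[sub /eqP dis]]]].
have cov x : x \in S -> (x \in O1) || (x \in O2).
  by move=> xS; move/subsetP: sub => /(_ x xS); rewrite inE.
have dj x : x \in S -> x \in O1 -> x \in O2 -> False.
  move=> xS x1 x2; have : x \in S :&: O1 :&: O2 by rewrite !inE xS x1 x2.
  by rewrite dis inE.
exact: dj q qS (H _ _ o1 o2 cov dj p q pS qS pO1) qO2.
Qed.

Lemma conn1 p : is_connected E [set p].
Proof.
apply: conn_intro => O1 O2 _ _ _ _ x y; rewrite !inE => /eqP-> /eqP->. done.
Qed.

Lemma conn_add (S : {set pt V}) s b : is_connected E S -> s \in E -> inr s \in S -> b \in s ->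
  is_connected E (inl b |: S).
Proof.
move=> C sE sS bs; apply: conn_intro => O1 O2 o1 o2 cov dis.
have [_ op1] := proj1 (openP O1) o1; have [_ op2] := proj1 (openP O2) o2.
have bS' : inl b \in inl b |: S by rewrite setU11.
have sS' : inr s \in inl b |: S by rewrite setU1r.
have rep x : x \in inl b |: S -> exists2 y, y \in S & (x \in O1) = (y \in O1).
  rewrite in_setU1 => /orP[/eqP->|xS]; last by exists x.
  exists (inr s) => //; case b1: (inl b \in O1); first by rewrite (op1 _ _ sE bs b1).
  move: (cov _ bS'); rewrite b1 /= => b2.
  by apply/esym/negP => s1; apply: (dis _ sS' s1 (op2 _ _ sE bs b2)).
have cov' x : x \in S -> (x \in O1) || (x \in O2) by move=> xS; apply: cov; rewrite setU1r.
have dis' x : x \in S -> x \in O1 -> x \in O2 -> False by move=> xS; apply: dis; rewrite setU1r.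
move=> p q /rep[p' p'S ->] /rep[q' q'S ->].
exact: (conn_same C o1 o2 cov' dis' p'S q'S).
Qed.

Definition rK (K : {set V}) : rel V := [rel x y | [&& x \in K, y \in K & adj E x y]].
Definition connK (K : {set V}) := forall x y, x \in K -> y \in K -> connect (rK K) x y.
Definition iE (K : {set V}) := [set s in E | s \subset K].
Definition hE (K : {set V}) := [set s in E | #|s :&: K| == 1].

Lemma path_in (K : {set V}) x q : x \in K -> path (rK K) x q -> forall y, y \in x :: q -> y \in K.
Proof.
elim: q x => [|z q IH] x xK /=; first by move=> _ y; rewrite inE => /eqP->.
case/andP => /and3P[_ zK _] pq y; rewrite inE => /orP[/eqP->//|]; exact: IH.
Qed.

Hypothesis Hnc : ~ (exists p : seq V, [/\ uniq p, 2 < size p & cycle (adj E) p]).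

Lemma one_nb (K : {set V}) u k1 k2 : connK K -> u \notin K -> k1 \in K -> k2 \in K ->
  adj E u k1 -> adj E u k2 -> k1 = k2.
Proof.
move=> cK uK k1K k2K a1 a2; apply/eqP/negPn/negP => k12.
have /connectP[p pp lp] := cK _ _ k1K k2K.
move: lp; case: (shortenP pp) => q pq uq _ lq.
have inK := path_in k1K pq.
apply: Hnc; exists [:: u, k1 & q]; split.
- rewrite cons_uniq uq andbT; apply/negP => /inK; rewrite (negPf uK) //.
- case: q {pq uq inK} lq => [|? ?] /=; last by [].
  by move=> e; rewrite e eqxx in k12.
- rewrite /= a1 rcons_path (sub_path _ pq) /=; last by move=> x y /and3P[].
  by rewrite -lq adjC.
Qed.

Lemma iE_add (K : {set V}) u k : connK K -> u \notin K -> k \in K -> adj E u k ->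
  iE (u |: K) = [set u; k] |: iE K.
Proof.
move=> cK uK kK uk; apply/setP => s; rewrite !inE; apply/idP/idP.
  case/andP => sE ss; case us: (u \in s).
    have [b [ub sb]] := edge_other sE us; subst s.
    have bK : b \in K.
      move/subsetP: ss => /(_ b); rewrite !inE eqxx orbT => /(_ isT).
      by rewrite eq_sym (negPf ub).
    by rewrite (one_nb cK uK kK bK uk sE) eqxx.
  apply/orP; right; rewrite sE /=; apply/subsetP => x xs.
  move/subsetP: ss => /(_ x xs); rewrite in_setU1 => /orP[/eqP ex|//].
  by move: us; rewrite -ex xs.
case/orP => [/eqP->|/andP[sE ss]].
  by rewrite -/(adj E u k) uk subUset !sub1set !inE eqxx kK orbT.
by rewrite sE; apply: subset_trans ss _; apply: subsetUr.
Qed.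

Lemma card_iE_add (K : {set V}) u k : connK K -> u \notin K -> k \in K -> adj E u k ->
  #|iE (u |: K)| = #|iE K|.+1.
Proof.
move=> cK uK kK uk; rewrite (iE_add cK uK kK uk) cardsU1.
suff -> : [set u; k] \notin iE K by [].
rewrite inE negb_and; apply/orP; right; rewrite subUset sub1set (negPf uK) //.
Qed.

Lemma connK_add (K : {set V}) u k : connK K -> u \notin K -> k \in K -> adj E u k -> connK (u |: K).
Proof.
move=> cK uK kK uk.
have sub : forall x y, x \in K -> y \in K -> connect (rK (u |: K)) x y.
  move=> x y xK yK; apply: connect_sub (cK _ _ xK yK) => a b /and3P[aK bK ab].
  by apply: connect1; rewrite /rK /= !inE aK bK ab !orbT.
have uk' : connect (rK (u |: K)) u k by apply: connect1; rewrite /rK /= !inE eqxx kK uk orbT.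
have ku' : connect (rK (u |: K)) k u by apply: connect1; rewrite /rK /= !inE eqxx kK adjC uk orbT.
move=> x y; rewrite !inE => /orP[/eqP->|xK] /orP[/eqP->|yK].
- exact: connect0.
- exact: connect_trans uk' (sub _ _ kK yK).
- exact: connect_trans (sub _ _ xK kK) ku'.
- exact: sub.
Qed.

Lemma grow (W : {set V}) : connK W -> forall n (K : {set V}), #|W :\: K| = n ->
  K \subset W -> connK K -> #|iE K| + 1 = #|K| -> #|iE W| + 1 = #|W|.
Proof.
move=> cW; elim=> [|n IH] K dK sKW cK hK.
  have -> : W = K by apply/eqP; rewrite eqEsubset sKW -setD_eq0 -cards_eq0 dK.
  exact: hK.
have /set0Pn[x] : W :\: K != set0 by rewrite -card_gt0 dK.
rewrite inE => /andP[xK xW].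
have /set0Pn[k0 k0K] : K != set0 by rewrite -card_gt0 -hK addn1.
have [/existsP[u /existsP[k /and4P[uW uK kK ku]]]|nocr] :=
  boolP [exists u, exists k, [&& u \in W, u \notin K, k \in K & adj E k u]].
  have uk : adj E u k by rewrite adjC.
  apply: (IH (u |: K)).
  - have := cardsD1 u (W :\: K); rewrite !inE uK uW setDDl dK /=.
    by rewrite setUC add1n => -[].
  - by rewrite subUset sub1set uW sKW.
  - exact: connK_add cK uK kK uk.
  - rewrite (card_iE_add cK uK kK uk) cardsU1 uK -hK /=; lia.
have cl : closed (rK W) K.
  move=> y z /and3P[yW zW yz]; case yK: (y \in K); case zK: (z \in K) => //.
    by case/negP: nocr; apply/existsP; exists z; apply/existsP; exists y; rewrite zW zK yK yz.
  by case/negP: nocr; apply/existsP; exists y; apply/existsP; exists z; rewrite yW yK zK adjC yz.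
have := closed_connect cl (cW _ _ (subsetP sKW _ k0K) xW).
by rewrite k0K (negPf xK).
Qed.

Lemma count_tree (W : {set V}) w0 : connK W -> w0 \in W -> #|iE W| + 1 = #|W|.
Proof.
move=> cW w0W; apply: (grow cW (erefl _) (K := [set w0])).
- by rewrite sub1set.
- by move=> x y; rewrite !inE => /eqP-> /eqP->; apply: connect0.
- suff -> : iE [set w0] = set0 by rewrite cards0 cards1.
  apply/setP=> s; rewrite !inE; apply/negP => /andP[sE ss].
  by have := subset_leq_card ss; rewrite cards1 (Hg sE).
Qed.

Lemma sum_val (W : {set V}) :
  \sum_(v in W) valence E v = 2 * #|iE W| + #|hE W|.
Proof.
rewrite /valence /Ev.
under eq_bigr do rewrite card_sum.
rewrite exchange_big /= /iE /hE !card_sum big_distrr -big_split /=.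
apply: eq_bigr => s sE.
have -> : \sum_(i in W) (i \in s : nat) = #|s :&: W|.
  by rewrite -card_sum; apply: eq_card => x; rewrite !inE andbC.
have [a [b [ab ->]]] := edgeP sE.
rewrite cardI2 // subUset !sub1set.
by case: (a \in W); case: (b \in W).
Qed.

Definition Wv (T' : {set pt V}) := [set v | inl v \in T'].

Lemma rK_sym K : symmetric (rK K).
Proof. by move=> x y; rewrite /rK /= adjC andbCA. Qed.

Lemma struct (T' : {set pt V}) w0 : is_open E T' -> is_connected E T' -> w0 \in Wv T' ->
  connK (Wv T') /\ (forall s, inr s \in T' -> exists2 z, z \in s & z \in Wv T').
Proof.
move=> oT cT w0W; set W := Wv T'.
have Win x : (x \in W) = (inl x \in T') by rewrite /W /Wv inE.
have [sT opT] := proj1 (openP T') oT.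
set K := [set x in W | connect (rK W) w0 x].
have Kin x : (x \in K) = (x \in W) && connect (rK W) w0 x by rewrite /K inE.
set O1 := [set p : pt V | match p with inl x => x \in K
            | inr s => (s \in E) && [exists x in s, x \in K] end].
have O1l x : (inl x \in O1) = (x \in K) by rewrite /O1 inE.
have O1r s : (inr s \in O1) = (s \in E) && [exists x in s, x \in K] by rewrite /O1 inE.
have o1 : is_open E O1.
  apply/openP; split.
    by apply/subsetP => -[x|s]; rewrite ?O1l ?O1r ?tsl ?tsr // => /andP[].
  move=> v s sE vs; rewrite O1l O1r sE => vK; apply/existsP; exists v; rewrite vs.
  done.
have o2 : is_open E (T' :\: O1).
  apply/openP; split; first exact: subset_trans (subsetDl _ _) sT.
  move=> v s sE vs; rewrite !in_setD => /andP[vO vT]; rewrite (opT _ _ sE vs vT) andbT.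
  rewrite O1r sE /=; apply/negP => /existsP[x /andP[xs xK]].
  have [b [vb sb]] := edge_other sE vs.
  have xb : x = b.
    move: xs; rewrite sb !inE => /orP[/eqP xv|/eqP //].
    by move: vO; rewrite O1l -xv xK.
  have vW : v \in W by rewrite Win.
  have xW : x \in W by move: xK; rewrite Kin => /andP[].
  have rxv : rK W x v by rewrite /rK /= xW vW /adj setUC xb -sb sE.
  move: vO; rewrite O1l Kin vW /=; apply/negP/negPn.
  move: xK; rewrite Kin => /andP[_ cx]; apply: connect_trans cx (connect1 rxv).
have cov p : p \in T' -> (p \in O1) || (p \in T' :\: O1).
  by move=> pT; rewrite in_setD pT andbT orbN.
have dis p : p \in T' -> p \in O1 -> p \in T' :\: O1 -> False.
  by move=> _ p1; rewrite in_setD p1.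
have w0O : inl w0 \in O1 by rewrite O1l Kin w0W connect0.
have w0T : inl w0 \in T' by rewrite -Win.
have allO q : q \in T' -> q \in O1 := fun qT => conn_same cT o1 o2 cov dis w0T qT w0O.
have inK x : x \in W -> connect (rK W) w0 x.
  by move=> xW; have := allO _ (etrans (esym (Win x)) xW); rewrite O1l Kin => /andP[].
split.
  move=> x y xW yW; apply: connect_trans (inK _ yW).
  by rewrite (sym_connect_sym (@rK_sym W)) inK.
move=> s sT'; move: (allO _ sT'); rewrite O1r => /andP[_ /existsP[z /andP[zs zK]]].
by exists z => //; move: zK; rewrite Kin => /andP[].
Qed.

Lemma intsum (W : {set V}) (f : V -> nat) (i h : nat) :
  (\sum_(v in W) f v = 2 * i + h)%N -> (i + 1 = #|W|)%N ->
  (\sum_(v in W) (2%:Z - (f v)%:Z) = 2%:Z - h%:Z)%R.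
Proof.
move=> H1 H2.
rewrite GRing.sumrB sumr_const.
have -> : (\sum_(v in W) ((f v)%:Z) = ((\sum_(v in W) f v)%N)%:Z)%R.
  by rewrite -natz natr_sum; apply: eq_bigr => v _; rewrite natz.
rewrite H1 -H2; lia.
Qed.

Lemma branch_facts (T' : {set pt V}) v e0 u : is_branch_at E v e0 T' -> e0 \in Ev E v ->
  u \in e0 -> u != v -> [/\ inl v \notin T', inr e0 \in T' & inl u \in T'].
Proof.
move=> Hb; rewrite inE => /andP[e0E ve0] ue0 uv; split.
- apply/negP => /(proj1 (Hb _)) [C [_ sub _ vC]].
  by have := subsetP sub _ vC; rewrite in_setD1 eqxx.
- apply: (proj2 (Hb _)); exists [set inr e0]; split.
  + exact: conn1.
  + by rewrite sub1set in_setD1 tsr e0E.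
  + exact: set11.
  + exact: set11.
- apply: (proj2 (Hb _)); exists (inl u |: [set inr e0]); split.
  + by apply: (@conn_add _ e0); [exact: conn1 | exact: e0E | exact: set11 | exact: ue0].
  + by rewrite subUset !sub1set !in_setD1 tsr e0E tsl /= uv.
  + by rewrite setU1r ?set11.
  + exact: setU11.
Qed.

Hypothesis Hc : forall x y : V, connect (adj E) x y.

Lemma adj_neq x y : adj E x y -> x != y.
Proof. by move=> xy; apply/eqP => e; move: (Hg xy); rewrite e setUid cards1. Qed.

Local Open Scope ring_scope.
Lemma main_sec (T' : {set pt V}) : T' != set0 -> is_open E T' -> is_connected E T' ->
  [/\ chiS E T' <= 2,
      chiS E T' = 2 <-> T' = tspace E
    & chiS E T' = 1 <-> is_branch E T'].
Proof.
move=> /set0Pn[p0 p0T] oT cT.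
have [sT opT] := proj1 (openP T') oT.
set W := Wv T'.
have Win x : (x \in W) = (inl x \in T') by rewrite /W /Wv inE.
have [W0|/set0Pn[w0 w0W]] := eqVneq W set0.
  have chi0 : chiS E T' = 0%R.
    rewrite /chiS big_pred0 // => v; rewrite -Win W0 inE //.
  have [e eT] : exists e, inr e \in T'.
    case: p0 p0T => [x|e] pT; last by exists e.
    by move: pT; rewrite -Win W0 inE.
  have eE : e \in E by rewrite -tsr (subsetP sT _ eT).
  have [a [b [ab ee]]] := edgeP eE.
  rewrite chi0; split => //; split => // H.
  - by move: (tsl a); rewrite -H -Win W0 inE.
  - case: H => v [e0 [Hev Hb]].
    move: (Hev); rewrite inE => /andP[e0E ve0].
    have [u [vu e0e]] := edge_other e0E ve0.
    have ue0 : u \in e0 by rewrite e0e !inE eqxx orbT.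
    have uv : u != v by rewrite eq_sym.
    have [_ _] := branch_facts Hb Hev ue0 uv.
    by rewrite -Win W0 inE.
have [cW emeet] := struct oT cT w0W.
have chiE : chiS E T' = (2%:Z - (#|hE W|)%:Z)%R.
  rewrite /chiS (eq_bigl (fun v => v \in W)); last by move=> v; rewrite Win.
  exact: intsum (sum_val W) (count_tree cW w0W).
set h := #|hE W| in chiE.
have hEin a b : a \in W -> b \notin W -> [set a; b] \in E -> [set a; b] \in hE W.
  move=> aW bW abE; rewrite inE abE cardI2 ?aW ?(negPf bW) //.
  by apply: adj_neq; exact: abE.
rewrite chiE; split.
- lia.
- have -> : (2%:Z - h%:Z = 2) <-> h = 0%N by split; lia.
  split.
    move=> /eqP; rewrite cards_eq0 => /eqP h0.
    have WT : forall x, x \in W.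
      move=> x; apply/negPn/negP => xW.
      have cl : closed (adj E) W.
        move=> y z yz; case yW: (y \in W); case zW: (z \in W) => //.
          by have := hEin _ _ yW (negbT zW) yz; rewrite h0 inE.
        by have := hEin _ _ zW (negbT yW) (etrans (adjC z y) yz); rewrite h0 inE.
      by have := closed_connect cl (Hc w0 x); rewrite w0W (negPf xW).
    apply/setP => -[x|s]; first by rewrite tsl -Win WT.
    rewrite tsr; apply/idP/idP => [sT'|sE]; first by rewrite -tsr (subsetP sT _ sT').
    have [a [b [_ ee]]] := edgeP sE.
    by apply: (opT a) => //; [rewrite ee !inE eqxx | rewrite -Win WT].
  move=> Tt; apply/eqP; rewrite cards_eq0; apply/eqP/setP => s; rewrite !inE.
  apply/negP => /andP[sE].
  have WT x : x \in W by rewrite Win Tt tsl.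
  have [a [b [ab ee]]] := edgeP sE.
  by rewrite ee cardI2 // !WT.
- have -> : (2%:Z - h%:Z = 1) <-> h = 1%N by split; lia.
  split.
    move=> /eqP /cards1P [e0 he0].
    have : e0 \in hE W by rewrite he0 set11.
    rewrite inE => /andP[e0E c1].
    have [a [b [ab ee]]] := edgeP e0E.
    have [a' [v [a'W vW e0eq]]] : exists a' v, [/\ a' \in W, v \notin W & e0 = [set a'; v]].
      move: c1; rewrite ee cardI2 //; case aW: (a \in W); case bW: (b \in W) => //= _.
        by exists a, b; rewrite aW bW.
      by exists b, a; rewrite aW bW setUC.
    have a'v : a' != v by apply/eqP => e; move: vW; rewrite -e a'W.
    have e0T : inr e0 \in T' by apply: (opT a') => //; rewrite ?e0eq ?inE ?eqxx // -Win.
    have vT : inl v \notin T' by rewrite -Win.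
    exists v, e0; split; first by rewrite inE e0E e0eq !inE eqxx orbT.
    move=> y; split.
      move=> yT; exists T'; split => //.
      apply/subsetP => q qT; rewrite in_setD1 (subsetP sT _ qT) andbT.
      by apply/eqP => e; move: vT; rewrite -e qT.
    case=> C [cC sC eC yC].
    set O2 := [set q : pt V | match q with inl x => (inl x \notin T') && (x != v)
              | inr s => [&& s \in E, inr s \notin T' & s != e0] end].
    have O2l x : (inl x \in O2) = (inl x \notin T') && (x != v) by rewrite /O2 inE.
    have O2r s : (inr s \in O2) = [&& s \in E, inr s \notin T' & s != e0] by rewrite /O2 inE.
    have o2 : is_open E O2.
      apply/openP; split.
        by apply/subsetP => -[x|s]; rewrite ?O2l ?O2r ?tsl ?tsr // => /andP[].
      move=> x s sE xs; rewrite O2l O2r sE => /andP[xT xv].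
      have xW : x \notin W by rewrite Win.
      have se0 : s != e0.
        apply/eqP => se; move: xs; rewrite se e0eq !inE => /orP[]/eqP xe.
          by move: xW; rewrite xe a'W.
        by move: xv; rewrite xe eqxx.
      rewrite se0 andbT; apply/negP => sT'.
      have [z zs zW] := emeet _ sT'.
      have [b' [xb' sb']] := edge_other sE xs.
      have zb' : z = b'.
        move: zs; rewrite sb' !inE => /orP[/eqP zx|/eqP //].
        by move: xW; rewrite -zx zW.
      have : s \in hE W.
        rewrite sb' setUC; apply: hEin; [by rewrite -zb' | done | by rewrite setUC -sb'].
      by rewrite he0 inE (negPf se0).
    have cov q : q \in C -> (q \in T') || (q \in O2).
      move=> qC; have := subsetP sC _ qC; rewrite in_setD1.
      case qT: (q \in T') => //= /andP[qv qs].
      case: q qT qv qs qC => [x|s] qT qv qs _.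
        by rewrite O2l qT /=; apply: contra qv => /eqP->.
      rewrite O2r qT -tsr qs /=; apply/eqP => se.
      by move: e0T; rewrite -se qT.
    have dis q : q \in C -> q \in T' -> q \in O2 -> False.
      by case: q => [x|s] _ qT; rewrite ?O2l ?O2r qT // andbF.
    by have := conn_same cC oT o2 cov dis eC yC; apply.
  case=> v [e0 [Hev Hb]].
  move: (Hev); rewrite inE => /andP[e0E ve0].
  have [u [vu e0e]] := edge_other e0E ve0.
  have ue0 : u \in e0 by rewrite e0e !inE eqxx orbT.
  have uv : u != v by rewrite eq_sym.
  have [vT e0T uT] := branch_facts Hb Hev ue0 uv.
  have vW : v \notin W by rewrite Win.
  have uW : u \in W by rewrite Win.
  have claim a b : a \in W -> b \notin W -> [set a; b] \in E -> [set a; b] = e0.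
    move=> aW bW abE.
    have abT : inr [set a; b] \in T' by apply: (opT a) => //; rewrite ?inE ?eqxx // -Win.
    have [bv|bv] := eqVneq b v.
      subst b; have [au|au] := eqVneq a u; first by rewrite au setUC e0e.
      have va : adj E v a by rewrite /adj setUC.
      have vu' : adj E v u by rewrite /adj -e0e.
      by move: au; rewrite (one_nb cW vW aW uW va vu') eqxx.
    have : inl b \in T'.
      apply: (proj2 (Hb _)); exists (inl b |: T'); split.
      + by apply: (@conn_add _ [set a; b]) => //; rewrite !inE eqxx orbT.
      + rewrite subUset sub1set in_setD1 tsl andbT /= bv /=.
        apply/subsetP => q qT; rewrite in_setD1 (subsetP sT _ qT) andbT.
        by apply/eqP => e; move: vT; rewrite -e qT.
      + by rewrite setU1r.
      + exact: setU11.
    by rewrite -Win (negPf bW).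
  apply/eqP/cards1P; exists e0; apply/setP => s; rewrite !inE.
  apply/idP/idP => [/andP[sE]|/eqP->].
    have [a [b [ab ee]]] := edgeP sE.
    rewrite ee cardI2 //; case aW: (a \in W); case bW: (b \in W) => //= _.
      by apply/eqP; apply: claim; rewrite ?aW ?bW // -ee.
    by apply/eqP; rewrite setUC; apply: claim; rewrite ?aW ?bW // setUC -ee.
  by rewrite e0E e0e cardI2 1?eq_sym // (negPf vW) uW.
Qed.
End Tree.

Unset Implicit Arguments.
Local Open Scope ring_scope.

Theorem lemma2p9 (V : finType) (E : {set {set V}}) (T' : {set pt V}) :
  is_tree E -> T' != set0 -> is_open E T' -> is_connected E T' ->
  [/\ chiS E T' <= 2,
      chiS E T' = 2 <-> T' = tspace E
    & chiS E T' = 1 <-> is_branch E T'].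
Proof.
move=> [Hg [Hc Hnc]] Tn oT cT.
exact: (main_sec Hg Hnc Hc Tn oT cT).
Qed.
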